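(* Assume $\mathbb{E}[f(x)]\ge c$ and fix a type vector $\kappa$. Let ${\bf g}$ be a network that is stable under complete information (i.e., when all agents know $\kappa$, no selected pair would form a new link or sever an existing link of ${\bf g}$) and that belongs to one of the following classes: (1) the empty network; (2) a minimally connected (tree) network, including a star; (3) the complete network; (4) a core-periphery network; (5) a wheel network. Then ${\bf g}\in G^*_{IC}(\kappa)$.
   Context: Model. There are $N\ge 2$ agents $I=\{1,\dots,N\}$. Each agent $i$ has a private type $k_i\in X$; types are drawn i.i.d. from a prior distribution $H$ on $X$, and $\kappa=(k_1,\dots,k_N)$ is the type vector. There is a function $f:X\to\mathbb{R}_{>0}$, a link cost $c>0$ and a decay factor $\delta\in(0,1)$; $\mathbb{E}[f(x)]=\int_X f\,dH$ is assumed well defined. A network ${\bf g}$ is a set of unordered pairs $ij$ ($i\neq j$), called links. Agents $i,j$ are connected in ${\bf g}$ if there is a path of links between them; $d_{ij}$ is the length of a shortest such path ($\infty$ if not connected); $C_i$ denotes the component of ${\bf g}$ containing $i$. Agent $i$'s payoff is $u_i({\bf g})=\sum_{j\neq i,\ j\text{ connected to }i}\delta^{d_{ij}-1}f(k_j)-c\cdot\#\{j: ij\in{\bf g}\}$. Dynamics. The network is empty at $t=0$. In each period $t\ge1$ one unordered pair $(i,j)$ is selected; the sequence of selected pairs up to $t$ is the selection path $\gamma(t)$. The selected agents observe each other's components and simultaneously choose $a_{ij},a_{ji}\in\{0,1\}$ (1 = agree to form the link if absent / keep it if present, 0 = refuse / sever); after the period the link $ij$ is present iff $a_{ij}=a_{ji}=1$.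 Agents are myopic and play the stable optimistic equilibrium (SOE): agent $i$ chooses $1$ iff his expected current payoff (w.r.t. his belief) from the network resulting with the link $ij$ is at least his current payoff without it. Information. Under complete information every agent knows $\kappa$. Under incomplete information (simple updating rule), if $i$ and $j$ have ever been connected at some period so far, each knows the other's type; otherwise each one's belief about the other's type is the prior $H$. Emergence and stability. Given a selection path $\gamma(t)$, the resulting network ${\bf g}(\gamma(t))$ and beliefs $B(\gamma(t))$ are uniquely determined. A pair $({\bf g},B)$ is stable if no link is formed or severed along any subsequent selection path. $G^*_{IC}(\kappa)$ is the set of networks ${\bf g}$ such that, under incomplete information, ${\bf g}={\bf g}(\gamma(t))$ for some selection path $\gamma(t)$ and $({\bf g}(\gamma(t)),B(\gamma(t)))$ is stable. Network classes. ${\bf g}$ is complete if $ij\in{\bf g}$ for all $i\neq j$. A star: there is $i$ with $ij\in{\bf g}$ for all $j\neq i$ and no other links. Core-periphery: there is a nonempty $I'\subsetneq I$ such that all pairs in $I'$ are linked and every $j'\in I\setminus I'$ is linked to exactly one agent of $I'$ and to no other agent. Tree (minimally connected): connected, and removing any link disconnects it. Wheel: there is a bijection $\pi:I\to I$ such that ${\bf g}$ consists exactly of the links $\pi^{-1}(1)\pi^{-1}(2),\pi^{-1}(2)\pi^{-1}(3),\dots,\pi^{-1}(N-1)\pi^{-1}(N),\pi^{-1}(N)\pi^{-1}(1)$. *)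

(* Defs.v *)
From HB Require Import structures.
From mathcomp Require Import all_boot all_order all_algebra all_fingroup.
Set Implicit Arguments. Unset Strict Implicit. Unset Printing Implicit Defensive.
Import Order.TTheory GRing.Theory Num.Theory.
Local Open Scope ring_scope.

(* Agents are 'I_N.  A network is a set of links; a link ij is the
   two-element set [set i; j]. *)
Definition network (N : nat) := {set {set 'I_N}}.

Definition wf_network N (g : network N) : bool := [forall e in g, #|e| == 2%N].

Definition adj N (g : network N) : rel 'I_N :=
  fun i j => (i != j) && ([set i; j] \in g).

Definition has_walk N (g : network N) (i j : 'I_N) (n : nat) : bool :=
  [exists p : n.-tuple 'I_N, path (adj g) i p && (last i p == j)].

(* d_ij : length of a shortest path (only used when i,j are connected;
   then it is < N). *)
Definition dist N (g : network N) (i j : 'I_N) : nat :=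
  find (fun n => has_walk g i j n) (iota 0 N).

(* Beliefs: K is the set of ordered pairs (i,j) such that i knows j's type
   (under the simple updating rule: i and j have been connected at some
   period).  Otherwise i's belief about k_j is the prior H, and by linearity
   of the expected payoff only Ef = E[f(x)] matters. *)
Definition knowledge N := {set 'I_N * 'I_N}.

Section Model.
Variables (R : realFieldType) (X : Type) (N : nat).
Variables (f : X -> R) (kappa : 'I_N -> X) (Ef c delta : R).

Definition belief_val (K : knowledge N) (i j : 'I_N) : R :=
  if (i, j) \in K then f (kappa j) else Ef.

Definition exp_payoff (K : knowledge N) (g : network N) (i : 'I_N) : R :=
  \sum_(j | (j != i) && connect (adj g) i j)
     delta ^+ (dist g i j).-1 * belief_val K i j
  - c *+ #|[set j | adj g i j]|.

Definition update_know (g : network N) (K : knowledge N) : knowledge N :=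
  K :|: [set p | connect (adj g) p.1 p.2].

Definition step (st : network N * knowledge N) (p : 'I_N * 'I_N)
    : network N * knowledge N :=
  let g := st.1 in let K := st.2 in
  let gw := g :|: [set [set p.1; p.2]] in
  let go := g :\ [set p.1; p.2] in
  let agree a := exp_payoff K go a <= exp_payoff K gw a in
  let g' := if agree p.1 && agree p.2 then gw else go in
  (g', update_know g' K).

Definition run (st : network N * knowledge N) (s : seq ('I_N * 'I_N)) :=
  foldl step st s.

Definition valid_path (s : seq ('I_N * 'I_N)) : bool :=
  all (fun p => p.1 != p.2) s.

(* (g,B) stable: along no subsequent selection path is a link formed or
   severed (prefixes of selection paths are selection paths). *)
Definition stable (st : network N * knowledge N) : Prop :=
  forall s, valid_path s -> (run st s).1 = st.1.

(* complete information: every agent knows every type (K = all pairs,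
   which is preserved by updating) *)
Definition stable_CI (g : network N) : Prop := stable (g, setT).

Definition in_GIC (g : network N) : Prop :=
  exists s, valid_path s /\ (run (set0, set0) s).1 = g /\ stable (run (set0, set0) s).

End Model.

Definition is_empty_net N (g : network N) : Prop := g = set0.

Definition is_complete N (g : network N) : Prop :=
  forall i j : 'I_N, i != j -> adj g i j.

Definition is_star N (g : network N) : Prop :=
  exists i : 'I_N, forall j k, adj g j k = (j != k) && ((j == i) || (k == i)).

Definition net_connected N (g : network N) : Prop :=
  forall i j : 'I_N, connect (adj g) i j.

Definition is_tree N (g : network N) : Prop :=
  net_connected g /\ forall e, e \in g -> ~ net_connected (g :\ e).

Definition is_core_periphery N (g : network N) : Prop :=
  exists I' : {set 'I_N}, [/\ I' != set0, I' != setT,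
    (forall i j, i \in I' -> j \in I' -> i != j -> adj g i j) &
    (forall j', j' \notin I' ->
        #|[set k in I' | adj g j' k]| = 1%N /\
        (forall k, k \notin I' -> ~~ adj g j' k))].

(* sigma = pi^{-1}: the wheel links sigma(k) sigma(k+1 mod N) *)
Definition is_wheel N (g : network N) : Prop :=
  exists sigma : {perm 'I_N},
    g = [set [set sigma k; sigma (ordS k)] | k : 'I_N].

(* Main.v *)
Require Import Defs.
From HB Require Import structures.
From mathcomp Require Import all_boot all_order all_algebra all_fingroup.
From mathcomp Require Import lra.
Set Implicit Arguments. Unset Strict Implicit. Unset Printing Implicit Defensive.
Import Order.TTheory GRing.Theory Num.Theory.
Local Open Scope ring_scope.


Section Graph.
Variable N : nat.
Implicit Types (g h : network N) (i j a b : 'I_N).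

Lemma set2_eq (a b x y : 'I_N) : [set a; b] = [set x; y] -> a != b ->
  (a == x) && (b == y) || (a == y) && (b == x).
Proof.
move=> E nab.
have hx : x \in [set a; b] by rewrite E !inE eqxx.
have hy : y \in [set a; b] by rewrite E !inE eqxx orbT.
have ha : a \in [set x; y] by rewrite -E !inE eqxx.
have hb : b \in [set x; y] by rewrite -E !inE eqxx orbT.
move: ha hb; rewrite !inE; case/orP=> /eqP Ea; subst a.
  by case/orP=> /eqP Eb; subst b; rewrite ?eqxx ?andbT //; rewrite eqxx in nab.
by case/orP=> /eqP Eb; subst b; rewrite ?eqxx ?andbT ?orbT //; rewrite eqxx in nab.
Qed.

Lemma adj_sym g i j : adj g i j = adj g j i.
Proof. by rewrite /adj eq_sym setUC. Qed.

Lemma adj_sub g1 g2 i j : g1 \subset g2 -> adj g1 i j -> adj g2 i j.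
Proof. by move=> /subsetP S; rewrite /adj => /andP[-> /S]. Qed.

Lemma conn_sub g1 g2 x y : g1 \subset g2 ->
  connect (adj g1) x y -> connect (adj g2) x y.
Proof. by move=> S; apply: connect_sub => u v /(adj_sub S) /connect1. Qed.

Lemma conn_sym g x y : connect (adj g) x y = connect (adj g) y x.
Proof. by apply: sym_connect_sym => u v; apply: adj_sym. Qed.

Lemma conn_closed g (A : pred 'I_N) x y :
  (forall u v, adj g u v -> A u -> A v) -> connect (adj g) x y -> A x -> A y.
Proof.
move=> cl /connectP[p pp ->]; elim: p x pp => //= z p IH x /andP[e pp] Ax.
exact: (IH _ pp (cl _ _ e Ax)).
Qed.

Lemma isolated_nconn g a b : (forall e, e \in g -> b \notin e) -> a != b ->
  ~~ connect (adj g) a b.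
Proof.
move=> iso nab; apply/negP => C.
suff : (fun x => x != b) b by rewrite /= eqxx.
apply: (@conn_closed g (fun x => x != b) a b _ C nab) => u v /andP[_ ug] _; apply/negP => /eqP E; subst v.
by move: (iso _ ug); rewrite !inE eqxx orbT.
Qed.

Lemma has_walk_sub g1 g2 i j n : g1 \subset g2 -> has_walk g1 i j n -> has_walk g2 i j n.
Proof.
move=> S /existsP[p /andP[pp l]]; apply/existsP; exists p; rewrite l andbT.
by apply: sub_path pp => u v; apply: adj_sub.
Qed.

Lemma dist_sub g1 g2 i j : g1 \subset g2 -> (dist g2 i j <= dist g1 i j)%N.
Proof. by move=> S; apply: sub_find => n; apply: has_walk_sub. Qed.

Lemma dist_le g i j n : (n < N)%N -> has_walk g i j n -> (dist g i j <= n)%N.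
Proof.
move=> nN hw; rewrite /dist leqNgt; apply/negP => lt.
have := before_find 0%N lt; rewrite nth_iota // add0n hw //.
Qed.

Lemma dist_walk g i j : (dist g i j < N)%N -> has_walk g i j (dist g i j).
Proof.
move=> lt; have hs : has (fun n => has_walk g i j n) (iota 0 N).
  by rewrite has_find size_iota.
have := nth_find 0%N hs; rewrite nth_iota ?add0n //.
Qed.

Lemma dist_ge g i j m : (m <= N)%N -> (forall n, (n < m)%N -> ~~ has_walk g i j n) ->
  (m <= dist g i j)%N.
Proof.
move=> mN nw; rewrite leqNgt; apply/negP => lt.
have := nw _ lt; rewrite dist_walk //; exact: leq_trans lt mN.
Qed.

Lemma walk0 g i j : i != j -> ~~ has_walk g i j 0.
Proof.
move=> nij; apply/negP => /existsP[[s /= /eqP sz] /andP[_ l]].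
by move: sz l; case: s => //= _ /eqP E; rewrite E eqxx in nij.
Qed.

Lemma walk1 g i j : has_walk g i j 1 -> adj g i j.
Proof.
move/existsP=> [[s /= /eqP sz] /andP[pp l]].
by move: sz pp l; case: s => [|x [|]] //= _; rewrite andbT => a /eqP <-.
Qed.

Lemma walk1I g i j : adj g i j -> has_walk g i j 1.
Proof. by move=> a; apply/existsP; exists [tuple j] => /=; rewrite a eqxx. Qed.

Lemma walk2I g i k j : adj g i k -> adj g k j -> has_walk g i j 2.
Proof. by move=> a1 a2; apply/existsP; exists [tuple k; j] => /=; rewrite a1 a2 eqxx. Qed.

Lemma walk2 g i j : has_walk g i j 2 -> exists k, adj g i k /\ adj g k j.
Proof.
move/existsP=> [[s /= /eqP sz] /andP[pp l]].
move: sz pp l; case: s => [|x [|y [|]]] //= _; rewrite andbT => /andP[a1 a2] /eqP E.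
by exists x; rewrite -E.
Qed.

Lemma dist_ge1 g i j : (1 < N)%N -> i != j -> (1 <= dist g i j)%N.
Proof. by move=> N1 nij; apply: dist_ge => [|[|]] //; [exact: ltnW | move=> _; exact: walk0]. Qed.

Lemma dist_le1 g i j : (1 < N)%N -> adj g i j -> (dist g i j <= 1)%N.
Proof. by move=> N1 a; apply: dist_le => //; apply: walk1I. Qed.

Lemma dist_le2 g i k j : (2 < N)%N -> adj g i k -> adj g k j -> (dist g i j <= 2)%N.
Proof. by move=> N2 a1 a2; apply: dist_le => //; apply: walk2I a1 a2. Qed.

Lemma dist_ge2 g i j : (2 < N)%N -> i != j -> ~~ adj g i j -> (2 <= dist g i j)%N.
Proof.
move=> N2 nij na; apply: dist_ge; first exact: ltnW.
move=> [|[|]] // _; first exact: walk0.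
by apply/negP => /walk1; apply/negP.
Qed.

End Graph.


Section Pay.
Variables (R : realFieldType) (X : Type) (N : nat).
Variables (f : X -> R) (kappa : 'I_N -> X) (Ef c delta : R).
Hypothesis N2 : (2 <= N)%N.
Hypothesis fpos : forall x, 0 < f x.
Hypothesis cpos : 0 < c.
Hypothesis dpos : 0 < delta.
Hypothesis dlt1 : delta < 1.
Hypothesis cEf : c <= Ef.
Implicit Types (g h : network N) (i j a b : 'I_N) (K : knowledge N).

Local Notation pay := (exp_payoff f kappa Ef c delta).
Local Notation bel := (belief_val f kappa Ef).

Definition T K g a b := if connect (adj g) a b then delta ^+ (dist g a b).-1 * bel K a b else 0.
Definition deg g a := #|[set j | adj g a j]|.

Lemma pay_dec K g a : pay K g a = \sum_(b | b != a) T K g a b - c *+ deg g a.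
Proof. by rewrite /exp_payoff big_mkcondr. Qed.

Lemma deg_add g a b : a != b -> [set a; b] \notin g ->
  deg (g :|: [set [set a; b]]) a = (deg g a).+1.
Proof.
move=> nab ng; rewrite /deg.
have -> : [set j | adj (g :|: [set [set a; b]]) a j] = b |: [set j | adj g a j].
  apply/setP=> j; rewrite !inE /adj !inE.
  case: (eqVneq j b) => [->|njb]; first by rewrite eqxx !orbT andbT nab.
  case: (eqVneq a j) => //= naj.
  have -> : ([set a; j] == [set a; b]) = false.
    apply/negP => /eqP E.
    by move: (set2_eq E naj); rewrite eqxx (negbTE njb) /= (negbTE nab).
  by rewrite orbF.
by rewrite cardsU1 inE /adj nab (negbTE ng).
Qed.

Lemma bel_gt0 K a b : 0 < bel K a b.
Proof. rewrite /belief_val; case: ifP => _; [exact: fpos | exact: lt_le_trans cpos cEf]. Qed.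

Lemma T_ge0 K g a b : 0 <= T K g a b.
Proof. by rewrite /T; case: ifP => // _; rewrite mulr_ge0 ?exprn_ge0 ?ltW ?bel_gt0. Qed.

Lemma powd_le m n : (m <= n)%N -> delta ^+ n.-1 <= delta ^+ m.-1.
Proof.
move=> mn; apply: ler_wiXn2l; [exact: ltW | exact: ltW |].
by rewrite -!subn1 leq_sub2r.
Qed.

Lemma T_mono K g1 g2 a b : g1 \subset g2 -> T K g1 a b <= T K g2 a b.
Proof.
move=> S; rewrite /T; case: ifP => C1; last by case: ifP => // _; rewrite mulr_ge0 ?exprn_ge0 ?ltW ?bel_gt0.
rewrite (conn_sub S C1) ler_wpM2r //; first exact: ltW (bel_gt0 _ _ _).
by apply: powd_le; apply: dist_sub.
Qed.

Lemma bridge_agree K g a b : a != b -> ~~ connect (adj g) a b -> (a, b) \notin K ->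
  pay K g a <= pay K (g :|: [set [set a; b]]) a.
Proof.
move=> nab nc nK.
have ng : [set a; b] \notin g.
  by apply/negP => eg; move: nc; rewrite connect1 // /adj nab eg.
rewrite !pay_dec deg_add // mulrSr.
have nba : b != a by rewrite eq_sym.
rewrite (bigD1 b nba) /= [in X in _ <= X](bigD1 b nba) /=.
have -> : T K g a b = 0 by rewrite /T (negbTE nc).
have -> : T K (g :|: [set [set a; b]]) a b = Ef.
  have ad : adj (g :|: [set [set a; b]]) a b by rewrite /adj nab !inE eqxx orbT.
  rewrite /T connect1 //.
  have -> : dist (g :|: [set [set a; b]]) a b = 1%N.
    by apply/eqP; rewrite eqn_leq dist_le1 ?dist_ge1.
  by rewrite /= expr0 mul1r /belief_val (negbTE nK).
have H : \sum_(i | (i != a) && (i != b)) T K g a i <=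
       \sum_(i | (i != a) && (i != b)) T K (g :|: [set [set a; b]]) a i.
  by apply: ler_sum => i _; apply: T_mono; apply: subsetUl.
move: H cEf; set S1 := \sum_(i | _) _; set S2 := \sum_(i | _) _; set D := c *+ _.
move=> *; lra.
Qed.


Lemma setD1_notin (A : network N) x : x \notin A -> A :\ x = A.
Proof. by move=> nx; apply/setP => y; rewrite !inE; case: eqP => // ->; rewrite (negbTE nx). Qed.

Lemma conn_all g : net_connected g -> forall a b, connect (adj g) a b.
Proof. by []. Qed.

Lemma key g h a b0 e : e = [set a; b0] -> a != b0 -> e \in g -> e \notin h ->
  h \subset g :\ e -> net_connected h ->
  (forall b, b != a -> (dist (h :|: [set e]) a b <= dist g a b)%N \/
                       (dist (g :\ e) a b <= dist g a b)%N) ->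
  pay setT (g :\ e) a <= pay setT g a -> pay setT h a <= pay setT (h :|: [set e]) a.
Proof.
move=> Ee nab eg eh hsub hc cond.
have ngo : e \notin g :\ e by rewrite !inE eqxx.
have eg' : g = (g :\ e) :|: [set e] by rewrite setUC setD1K.
have dg : deg g a = (deg (g :\ e) a).+1 by rewrite {1}eg' Ee deg_add // -Ee.
have dh : deg (h :|: [set e]) a = (deg h a).+1 by rewrite Ee deg_add // -Ee.
rewrite !pay_dec dg dh !mulrSr.
have gosub : g :\ e \subset g by apply: subD1set.
have hw : h \subset h :|: [set e] by apply: subsetUl.
have hg : h \subset g by apply: subset_trans hsub gosub.
have cn : forall Y : network N, h \subset Y -> forall b, connect (adj Y) a b.
  by move=> Y S b; apply: conn_sub S (hc a b).
have pt : forall b, b != a ->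
   T setT g a b - T setT (g :\ e) a b <= T setT (h :|: [set e]) a b - T setT h a b.
  move=> b nba; rewrite /T (cn g hg) (cn _ hsub) (cn _ hw) (cn _ (subxx h)).
  have w0 := bel_gt0 setT a b; set w := bel setT a b.
  rewrite -!mulrBl; apply: ler_wpM2r; first exact: ltW.
  have h1 := powd_le (dist_sub a b hsub).
  have h2 := powd_le (dist_sub a b hw).
  have h3 := powd_le (dist_sub a b gosub).
  case: (cond b nba) => [/powd_le h4 | /powd_le h4]; first exact: lerB h4 h1.
  apply: (@le_trans _ _ 0); by rewrite ?subr_le0 ?subr_ge0.
have S : \sum_(b | b != a) (T setT g a b - T setT (g :\ e) a b) <=
         \sum_(b | b != a) (T setT (h :|: [set e]) a b - T setT h a b).
  by apply: ler_sum => b; apply: pt.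
rewrite !sumrB in S.
move: S; set A1 := \sum_(i | _) T setT g a i; set A2 := \sum_(i | _) T setT (g :\ e) a i.
set B1 := \sum_(i | _) T setT (h :|: [set e]) a i; set B2 := \sum_(i | _) T setT h a i.
set D1 := c *+ _; set D2 := c *+ _ .
move=> S1 S2; clear -S1 S2; lra.
Qed.

Lemma CI_agree g p : stable_CI f kappa Ef c delta g -> p.1 != p.2 ->
  [set p.1; p.2] \in g ->
  pay setT (g :\ [set p.1; p.2]) p.1 <= pay setT g p.1 /\
  pay setT (g :\ [set p.1; p.2]) p.2 <= pay setT g p.2.
Proof.
move=> st np eg; have := st [:: p]; rewrite /valid_path /= np => /(_ isT).
rewrite /run /= /step /=.
have -> : g :|: [set [set p.1; p.2]] = g by apply/setUidPl; rewrite sub1set.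
case: ifP => [/andP[-> ->] // | _ E].
by move: eg; rewrite -{1}E !inE eqxx.
Qed.

Definition connset h : knowledge N := [set q | connect (adj h) q.1 q.2].

Lemma step_bridge' h K p : p.1 != p.2 -> ~~ connect (adj h) p.1 p.2 ->
  (p.1, p.2) \notin K -> (p.2, p.1) \notin K ->
  step f kappa Ef c delta (h, K) p =
  (h :|: [set [set p.1; p.2]], update_know (h :|: [set [set p.1; p.2]]) K).
Proof.
move=> np nc nK1 nK2.
have ne : [set p.1; p.2] \notin h.
  by apply/negP => eh; move: nc; rewrite connect1 // /adj np eh.
rewrite /step /= setD1_notin //.
rewrite bridge_agree //=.
have -> : [set p.1; p.2] = [set p.2; p.1] by rewrite setUC.
by rewrite bridge_agree // 1?eq_sym // conn_sym.
Qed.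

Lemma step_bridge h K p : p.1 != p.2 -> ~~ connect (adj h) p.1 p.2 -> K \subset connset h ->
  step f kappa Ef c delta (h, K) p =
  (h :|: [set [set p.1; p.2]], update_know (h :|: [set [set p.1; p.2]]) K).
Proof.
move=> np nc KS.
have ne : [set p.1; p.2] \notin h.
  by apply/negP => eh; move: nc; rewrite connect1 // /adj np eh.
have nK1 : (p.1, p.2) \notin K.
  by apply/negP => /(subsetP KS); rewrite inE /= (negbTE nc).
have nK2 : (p.2, p.1) \notin K.
  by apply/negP => /(subsetP KS); rewrite inE /= conn_sym (negbTE nc).
rewrite /step /= setD1_notin //.
rewrite bridge_agree //=.
have -> : [set p.1; p.2] = [set p.2; p.1] by rewrite setUC.
by rewrite bridge_agree // 1?eq_sym // conn_sym.
Qed.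

Lemma step2 g h p : stable_CI f kappa Ef c delta g -> p.1 != p.2 ->
  [set p.1; p.2] \in g -> [set p.1; p.2] \notin h ->
  h \subset g :\ [set p.1; p.2] -> net_connected h ->
  (forall b, b != p.1 -> (dist (h :|: [set [set p.1; p.2]]) p.1 b <= dist g p.1 b)%N \/
                       (dist (g :\ [set p.1; p.2]) p.1 b <= dist g p.1 b)%N) ->
  (forall b, b != p.2 -> (dist (h :|: [set [set p.1; p.2]]) p.2 b <= dist g p.2 b)%N \/
                       (dist (g :\ [set p.1; p.2]) p.2 b <= dist g p.2 b)%N) ->
  step f kappa Ef c delta (h, setT) p = (h :|: [set [set p.1; p.2]], setT).
Proof.
move=> st np eg eh hs hc c1 c2.
have [a1 a2] := CI_agree st np eg.
have k1 := key (g:=g) (h:=h) (a:=p.1) (b0:=p.2) erefl np eg eh hs hc c1 a1.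
have k2 := key (g:=g) (h:=h) (a:=p.2) (b0:=p.1) (setUC _ _) (ltac:(by rewrite eq_sym)) eg eh hs hc c2 a2.
by rewrite /step /= setD1_notin // k1 k2 /= /update_know setTU.
Qed.

Local Notation run := (run f kappa Ef c delta).
Local Notation step := (step f kappa Ef c delta).

Definition edge (p : 'I_N * 'I_N) : {set 'I_N} := [set p.1; p.2].
Definition netof h (ps : seq ('I_N * 'I_N)) :=
  foldl (fun h p => h :|: [set edge p]) h ps.
Definition edges (ps : seq ('I_N * 'I_N)) : network N := [set x | x \in map edge ps].

Lemma netofE h ps : netof h ps = h :|: edges ps.
Proof.
elim: ps h => [|p ps IH] h /=.
  by apply/setP => x; rewrite !inE orbF.
rewrite IH; apply/setP => x; rewrite !inE orbA //.
Qed.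

Lemma connset_mono g1 g2 : g1 \subset g2 -> connset g1 \subset connset g2.
Proof. by move=> S; apply/subsetP => q; rewrite !inE; apply: conn_sub. Qed.

Fixpoint bridge_ok h (ps : seq ('I_N * 'I_N)) : Prop :=
  match ps with
  | [::] => True
  | p :: ps' => p.1 != p.2 /\ ~~ connect (adj h) p.1 p.2 /\ bridge_ok (h :|: [set edge p]) ps'
  end.

Lemma bridge_valid h ps : bridge_ok h ps -> valid_path ps.
Proof. by elim: ps h => //= p ps IH h [-> [_ /IH]]. Qed.

Lemma run_bridges ps h K : K \subset connset h -> bridge_ok h ps ->
  (run (h, K) ps).1 = netof h ps /\ (run (h, K) ps).2 \subset connset (netof h ps).
Proof.
elim: ps h K => [|p ps IH] h K KS //= [np [nc ok]].
rewrite /Defs.run /= step_bridge //; apply: IH => //.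
rewrite /update_know subUset subxx andbT; apply: subset_trans KS _.
by apply: connset_mono; apply: subsetUl.
Qed.

Lemma run_last st ps : ps != [::] -> connset (run st ps).1 \subset (run st ps).2.
Proof.
case/lastP: ps => // s p _; rewrite /Defs.run foldl_rcons.
by rewrite /Defs.step /=; case: ifP => _; apply: subsetUr.
Qed.

Lemma run_cat st s1 s2 : run st (s1 ++ s2) = run (run st s1) s2.
Proof. by rewrite /Defs.run foldl_cat. Qed.

Lemma connset_T g : net_connected g -> connset g = setT.
Proof. by move=> C; apply/setP => q; rewrite !inE C. Qed.

Lemma fresh_bridge ps h : all (fun p => p.1 != p.2) ps -> uniq (map snd ps) ->
  (forall p, p \in ps -> forall e, e \in h -> p.2 \notin e) ->
  pairwise (fun p q => q.2 != p.1) ps -> bridge_ok h ps.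
Proof.
elim: ps h => //= p ps IH h /andP[np nps] /andP[nin u] iso /andP[pw pws].
split => //; split.
  by apply: isolated_nconn => //; apply: iso; rewrite inE eqxx.
apply: IH => // q qin e; rewrite in_setU in_set1 => /orP[eh | /eqP ->].
  by apply: iso => //; rewrite inE qin orbT.
rewrite !inE negb_or; apply/andP; split.
  by move/allP: pw => /(_ q qin).
apply/negP => /eqP E; move: nin; rewrite -E.
by rewrite (map_f snd qin).
Qed.

Fixpoint ok2 g h (ps : seq ('I_N * 'I_N)) : Prop :=
  match ps with
  | [::] => True
  | p :: ps' => [/\ p.1 != p.2, edge p \in g, edge p \notin h, h \subset g :\ edge p &
      net_connected h] /\
      ((forall b, b != p.1 -> (dist (h :|: [set edge p]) p.1 b <= dist g p.1 b)%N \/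
                       (dist (g :\ edge p) p.1 b <= dist g p.1 b)%N) /\
      (forall b, b != p.2 -> (dist (h :|: [set edge p]) p.2 b <= dist g p.2 b)%N \/
                       (dist (g :\ edge p) p.2 b <= dist g p.2 b)%N)) /\
     ok2 g (h :|: [set edge p]) ps'
  end.

Lemma run2 g ps h : stable_CI f kappa Ef c delta g -> ok2 g h ps ->
  run (h, setT) ps = (netof h ps, setT).
Proof.
move=> st; elim: ps h => //= p ps IH h [[np eg eh hs hc] [[c1 c2] ok]].
by rewrite /Defs.run /= (step2 (g:=g)) //; apply: IH.
Qed.

Lemma ok2_valid g h ps : ok2 g h ps -> valid_path ps.
Proof. by elim: ps h => //= p ps IH h [[np _ _ _ _] [_ /IH H]]; move: H; rewrite /valid_path /= np. Qed.

Lemma GIC_of g s : valid_path s -> run (set0, set0) s = (g, setT) ->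
  stable_CI f kappa Ef c delta g -> in_GIC f kappa Ef c delta g.
Proof. by move=> v E st; exists s; rewrite E. Qed.

Lemma pay_cover K g a : (forall b, b != a -> connect (adj g) a b -> (a, b) \in K) ->
  pay K g a = pay setT g a.
Proof.
move=> cov; rewrite /exp_payoff; congr (_ - _); apply: eq_bigr => b /andP[nb cb].
by rewrite /belief_val cov // inE.
Qed.

Lemma step_eqCI h h' K p :
  h :|: [set edge p] = h' :|: [set edge p] -> h :\ edge p = h' :\ edge p ->
  (forall a b, a \in edge p -> connect (adj (h :|: [set edge p])) a b -> (a, b) \in K) ->
  (step (h, K) p).1 = (step (h', setT) p).1.
Proof.
move=> E1 E2 cov.
have sub : h :\ edge p \subset h :|: [set edge p].
  by apply: subset_trans (subD1set _ _) (subsetUl _ _).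
have cv : forall a, a \in edge p -> forall Y : network N, Y \subset h :|: [set edge p] ->
    pay K Y a = pay setT Y a.
  move=> a ae Y S; apply: pay_cover => b _ cb; apply: cov ae _.
  exact: conn_sub S cb.
have e1 : p.1 \in edge p by rewrite !inE eqxx.
have e2 : p.2 \in edge p by rewrite !inE eqxx orbT.
rewrite /Defs.step /= -/(edge p).
rewrite (cv _ e1 _ sub) (cv _ e2 _ sub) (cv _ e1 _ (subxx _)) (cv _ e2 _ (subxx _)).
by rewrite E1 E2.
Qed.

Lemma conn_single (e : {set 'I_N}) x y : connect (adj [set e]) x y ->
  x = y \/ (x \in e /\ y \in e).
Proof.
move=> C; case/orP: (orbN (x \in e)) => xe.
  right; split => //.
  apply: (@conn_closed _ _ (fun z => z \in e) x y) C xe.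
  move=> u v /andP[_]; rewrite inE => /eqP <- _; rewrite !inE eqxx orbT //.
left; apply/eqP; apply: (@conn_closed _ _ (fun z => x == z) x y) C (eqxx x).
move=> u v /andP[_]; rewrite inE => /eqP E /eqP ux; subst u.
by move: xe; rewrite -E !inE eqxx.
Qed.

Lemma conn_set0 x y : connect (adj (set0 : network N)) x y -> x = y.
Proof.
move=> C; apply/eqP; apply: (@conn_closed _ _ (fun z => x == z) x y) C (eqxx x).
by move=> u v /andP[_]; rewrite inE.
Qed.

Definition tog (ps : seq ('I_N * 'I_N)) := flatten [seq [:: q; q] | q <- ps].

Lemma toggles : stable_CI f kappa Ef c delta set0 ->
  forall (ps : seq ('I_N * 'I_N)) (K : knowledge N), uniq ps -> all (fun q : 'I_N * 'I_N => (q.1 < q.2)%N) ps ->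
  (forall q, q \in ps -> (q.1, q.2) \notin K /\ (q.2, q.1) \notin K) ->
  exists K', run (set0, K) (tog ps) = (set0, K') /\ K \subset K' /\
    (forall q, q \in ps -> (q.1, q.2) \in K' /\ (q.2, q.1) \in K').
Proof.
move=> st; elim=> [|q ps IH] K /=.
  by move=> *; exists K; split => //; split.
move=> /andP[qn u] /andP[lq lps] nK.
have nq : q.1 != q.2 by apply/eqP => E; move: lq; rewrite E ltnn.
have [nK1 nK2] := nK q (mem_head _ _).
set e := [set q.1; q.2].
have s1 : step (set0, K) q = ([set e], update_know [set e] K).
  have nc : ~~ connect (adj (set0 : network N)) q.1 q.2.
    by apply: isolated_nconn => // ?; rewrite inE.
  by rewrite step_bridge' // set0U.
set K1 := update_know [set e] K.
have s2 : step ([set e], K1) q = (set0, update_know set0 K1).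
  have E : (step ([set e], K1) q).1 = set0.
    rewrite (@step_eqCI _ set0) //.
    - by have := st [:: q]; rewrite /valid_path /= nq; apply.
    - by rewrite /edge -/e setUid set0U.
    - by rewrite /edge -/e setDv; apply/setP => x; rewrite !inE andbF.
    - move=> a b _ C; rewrite /K1 /update_know !inE /=; apply/orP; right.
      by move: C; rewrite /edge -/e setUid.
  move: E; rewrite /Defs.step /=; case: ifP => _ -> //.
have tK : forall x y, (x, y) \in K1 -> (x, y) \in K \/ x = y \/ (x \in e /\ y \in e).
  move=> x y; rewrite /K1 /update_know in_setU in_set /= => /orP[H | /conn_single H]; [by left | by right].
have tK2 : forall x y, (x, y) \in update_know set0 K1 -> (x, y) \in K1 \/ x = y.
  by move=> x y; rewrite /update_know !inE /= => /orP[H | /conn_set0 H]; [left | right].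
have hyp : forall r, r \in ps -> (r.1, r.2) \notin update_know set0 K1 /\
                                   (r.2, r.1) \notin update_know set0 K1.
  move=> r rin; have rq : r != q by apply/negP => /eqP E; move: qn; rewrite -E rin.
  have lr : (r.1 < r.2)%N by move/allP: lps => /(_ r rin).
  have [nr1 nr2] : (r.1, r.2) \notin K /\ (r.2, r.1) \notin K by apply: nK; rewrite inE rin orbT.
  have kk : forall x y, (x, y) \notin K -> x != y -> ~~ ((x \in e) && (y \in e)) ->
      (x, y) \notin update_know set0 K1.
    move=> x y nx nxy ne; apply/negP => /tK2 [/tK [| [|[i1 i2]]] | ].
    - by rewrite (negbTE nx).
    - by move=> E; rewrite E eqxx in nxy.
    - by rewrite i1 i2 in ne.
    - by move=> E; rewrite E eqxx in nxy.
  have ne : ~~ ((r.1 \in e) && (r.2 \in e)).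
    apply/negP => /andP[]; rewrite !inE => /orP[] /eqP E1 /orP[] /eqP E2; move: lr lq;
       rewrite ?E1 ?E2 ?ltnn //.
    - move=> _ _; move: rq; case: r E1 E2 {rin nr1 nr2} => [r1 r2] /= -> ->.
      by rewrite -pair_eqE /= !eqxx.
    - by move=> l1 l2; have := ltn_trans l1 l2; rewrite ltnn.
  have nr : r.1 != r.2 by apply/eqP => E; move: lr; rewrite E ltnn.
  split; apply: kk => //; first by rewrite eq_sym.
  by rewrite andbC.
have [K' [E [sub all']]] := IH (update_know set0 K1) u lps hyp.
exists K'; split.
  by rewrite /Defs.run /= s1 s2; exact: E.
split.
  apply: subset_trans sub; apply/subsetP => x xK.
  by rewrite /update_know /K1 !inE xK.
move=> r; rewrite inE => /orP[/eqP -> | /all' //].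
have a1 : adj [set e] q.1 q.2.
  by apply/andP; split; [exact: nq | exact: set11].
have h1 : (q.1, q.2) \in K1.
  by rewrite /K1 /update_know in_setU in_set /= connect1 ?orbT.
have h2 : (q.2, q.1) \in K1.
  by rewrite /K1 /update_know in_setU in_set /= connect1 ?orbT // adj_sym.
by split; apply: (subsetP sub); rewrite /update_know inE ?h1 ?h2.
Qed.

Lemma tog_valid (ps : seq ('I_N * 'I_N)) : all (fun q : 'I_N * 'I_N => (q.1 < q.2)%N) ps -> valid_path (tog ps).
Proof.
elim: ps => //= q ps IH /andP[lq /IH]; rewrite /valid_path /= => ->.
have nq : q.1 != q.2 by apply/eqP => E; move: lq; rewrite E ltnn.
by rewrite nq.
Qed.

Lemma empty_GIC : stable_CI f kappa Ef c delta set0 -> in_GIC f kappa Ef c delta set0.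
Proof.
move=> st.
set ps0 := enum [pred q : 'I_N * 'I_N | (q.1 < q.2)%N].
have al : all (fun q : 'I_N * 'I_N => (q.1 < q.2)%N) ps0 by apply/allP => q; rewrite mem_enum.
have h0 : forall q : 'I_N * 'I_N, q \in ps0 -> (q.1, q.2) \notin (set0 : knowledge N) /\ (q.2, q.1) \notin (set0 : knowledge N).
  by move=> q _; rewrite !inE.
have [K' [E [_ allK]]] := toggles st (enum_uniq _) al h0.
have o0 : (0 < N)%N by apply: leq_trans N2.
have o1 : (1 < N)%N by [].
have nn : tog ps0 != [::].
  have : (Ordinal o0, Ordinal o1) \in ps0 by rewrite mem_enum.
  by rewrite /tog; case: (ps0) => //.
have KT : K' = setT.
  apply/setP => [[a b]]; rewrite inE.
  case: (ltngtP a b) => ab.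
  - by have := allK (a, b); rewrite mem_enum inE /= ab => /(_ isT) [].
  - by have := allK (b, a); rewrite mem_enum inE /= ab => /(_ isT) [].
  - have := run_last (set0, set0) nn; rewrite E /= => /subsetP; apply.
    by rewrite inE /= (val_inj ab) connect0.
apply: (GIC_of (s := tog ps0)); [exact: tog_valid | by rewrite E KT | exact: st].
Qed.

Lemma pairs_of (l : seq {set 'I_N}) : all (fun e : {set 'I_N} => #|e| == 2) l ->
  exists ps, map edge ps = l /\ all (fun p : 'I_N * 'I_N => p.1 != p.2) ps.
Proof.
elim: l => [|e l IH] /=; first by exists [::].
case/andP=> /cards2P [x [y [nxy ->]]] /IH [ps [E A]].
by exists ((x, y) :: ps); rewrite /= E A nxy.
Qed.

Lemma reroute g x y : net_connected g -> [set x; y] \in g ->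
  connect (adj (g :\ [set x; y])) x y -> net_connected (g :\ [set x; y]).
Proof.
move=> C eg cxy u v; apply: (connect_sub _ (C u v)) => a b /andP[nab abg].
case: (eqVneq [set a; b] [set x; y]) => E.
  case/orP: (set2_eq E nab) => /andP[/eqP -> /eqP ->] //; by rewrite conn_sym.
by apply: connect1; rewrite /adj nab !inE E abg.
Qed.

Lemma tree_bridge g : is_tree g -> forall ps h, uniq (map edge ps) ->
  (forall p, p \in ps -> edge p \in g) -> h \subset g ->
  (forall p, p \in ps -> edge p \notin h) -> all (fun p : 'I_N * 'I_N => p.1 != p.2) ps ->
  bridge_ok h ps.
Proof.
move=> [C M]; elim=> //= p ps IH h /andP[nin u] ing hg nh /andP[np nps].
split => //; split.
  apply/negP => cn.
  have hs : h \subset g :\ edge p by rewrite subsetD1 hg nh // inE eqxx.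
  have epg : edge p \in g by apply: ing; rewrite inE eqxx.
  have := reroute C epg (conn_sub hs cn); exact: M.
apply: IH => //.
- by move=> q qin; apply: ing; rewrite inE qin orbT.
- by rewrite subUset hg sub1set ing // inE eqxx.
- move=> q qin; rewrite in_setU in_set1 negb_or nh ?inE ?qin ?orbT //=.
  by apply/negP => /eqP E; move: nin; rewrite -E map_f.
Qed.

Lemma tree_GIC g : wf_network g -> is_tree g -> stable_CI f kappa Ef c delta g ->
  in_GIC f kappa Ef c delta g.
Proof.
move=> wf tr st.
have al : all (fun e : {set 'I_N} => #|e| == 2) (enum g).
  by apply/allP => e; rewrite mem_enum => eg; move/forall_inP: wf; apply.
have [ps [E A]] := pairs_of al.
have ok : bridge_ok set0 ps.
  apply: (tree_bridge tr) => //.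
  - by rewrite E enum_uniq.
  - by move=> p pin; rewrite -mem_enum -E map_f.
  - by rewrite sub0set.
  - by move=> p _; rewrite inE.
have [E1 E2] := run_bridges (K := set0) (sub0set _) ok.
have eg : netof set0 ps = g.
  by rewrite netofE set0U; apply/setP => x; rewrite inE E mem_enum.
have o0 : (0 < N)%N by apply: leq_trans N2.
have o1 : (1 < N)%N by [].
have nn : ps != [::].
  apply/eqP => ps0; move: E; rewrite ps0 /= => /esym /eqP; rewrite -size_eq0 -cardE.
  move/eqP/cards0_eq => g0.
  have := tr.1 (Ordinal o0) (Ordinal o1); rewrite g0.
  by move/conn_set0 => /(congr1 val).
have KT : (run (set0, set0) ps).2 = setT.
  apply/eqP; rewrite eqEsubset subsetT /=.
  by have := run_last (set0, set0) nn; rewrite E1 eg connset_T //; case: tr.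
apply: (GIC_of (s := ps)).
- exact: bridge_valid ok.
- by rewrite -KT -eg -E1; case: (run _ _).
- exact: st.
Qed.

Lemma three_N (a b x : 'I_N) : a != b -> b != x -> a != x -> (2 < N)%N.
Proof.
move=> h1 h2 h3.
have := subset_leq_card (subsetT (a |: (b |: [set x]))); rewrite cardsT card_ord !cardsU1 cards1 !inE.
by rewrite (negbTE h1) (negbTE h2) (negbTE h3).
Qed.

Lemma pairwise_all (T : eqType) (r : rel T) (s : seq T) :
  (forall x y, x \in s -> y \in s -> r x y) -> pairwise r s.
Proof.
elim: s => // x s IH H; rewrite pairwise_cons; apply/andP; split.
  by apply/allP => y ys; apply: H; rewrite inE ?eqxx ?ys ?orbT.
by apply: IH => u v us vs; apply: H; rewrite inE ?us ?vs ?orbT.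
Qed.

Section CP.
Variables (g : network N) (I' : {set 'I_N}) (c0 : 'I_N) (nb : 'I_N -> 'I_N).
Hypothesis wf : wf_network g.
Hypothesis st : stable_CI f kappa Ef c delta g.
Hypothesis c0I : c0 \in I'.
Hypothesis core : forall i j, i \in I' -> j \in I' -> i != j -> adj g i j.
Hypothesis nbI : forall j, j \notin I' -> nb j \in I'.
Hypothesis nbadj : forall j, j \notin I' -> adj g j (nb j).
Hypothesis nbuniq : forall j k, j \notin I' -> k \in I' -> adj g j k -> k = nb j.
Hypothesis perper : forall j k, j \notin I' -> k \notin I' -> ~~ adj g j k.

Definition star := [seq (c0, k) | k <- enum (I' :\ c0)].
Definition per := [seq (nb j, j) | j <- enum (~: I')].
Definition ps1 := star ++ per.
Definition ps2 := enum [pred q : 'I_N * 'I_N | [&& q.1 \in I', q.2 \in I', (q.1 < q.2)%N,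
                                               q.1 != c0 & q.2 != c0]].
Definition h1 := edges ps1.

Lemma adj_char u v : adj g u v ->
  [\/ u \in I' /\ v \in I', u \notin I' /\ v = nb u | v \notin I' /\ u = nb v].
Proof.
move=> a; case: (boolP (u \in I')) => uI; case: (boolP (v \in I')) => vI.
- by apply: Or31.
- by apply: Or33; split => //; apply: nbuniq => //; rewrite adj_sym.
- by apply: Or32; split => //; apply: nbuniq.
- by move: (perper uI vI); rewrite a.
Qed.

Lemma nb_neq j : j \notin I' -> nb j != j.
Proof. by move=> jI; apply/eqP => E; move: (nbI jI); rewrite E (negbTE jI). Qed.

Lemma mem_star p : (p \in star) = (p.1 == c0) && (p.2 \in I' :\ c0).
Proof.
case: p => x y; rewrite /star; apply/mapP/andP => /=.
  by case=> k; rewrite mem_enum => kI [-> ->].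
by case=> /eqP -> yI; exists y; rewrite ?mem_enum.
Qed.

Lemma mem_per p : (p \in per) = (p.2 \notin I') && (p.1 == nb p.2).
Proof.
case: p => x y; rewrite /per; apply/mapP/andP => /=.
  by case=> k; rewrite mem_enum inE => kI [-> ->].
by case=> yI /eqP ->; exists y; rewrite ?mem_enum ?inE.
Qed.

Lemma h1_sub_g : h1 \subset g.
Proof.
apply/subsetP => x; rewrite /h1 /edges in_set => /mapP [[u v] pin ->].
rewrite /edge /=; move: pin; rewrite mem_cat mem_star mem_per /= => /orP[/andP[/eqP -> vI]|/andP[vI /eqP ->]].
  move: vI; rewrite !inE => /andP[nv vI].
  have nv' : c0 != v by rewrite eq_sym.
  by case/andP: (core c0I vI nv').
by case/andP: (nbadj vI); rewrite setUC.
Qed.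

Lemma edge_h1 p : p \in ps1 -> edge p \in h1.
Proof. by move=> pin; rewrite /h1 /edges in_set map_f. Qed.

Lemma h1_conn : net_connected h1.
Proof.
have toc : forall v, connect (adj h1) c0 v.
  have cI : forall v, v \in I' -> connect (adj h1) c0 v.
    move=> v vI; case: (eqVneq v c0) => [->|nv]; first exact: connect0.
    apply: connect1; rewrite /adj eq_sym nv /=.
    by apply: (edge_h1 (p := (c0, v))); rewrite mem_cat mem_star /= eqxx !inE nv vI.
  move=> v; case: (boolP (v \in I')) => vI; first exact: cI.
  apply: connect_trans (cI _ (nbI vI)) _; apply: connect1.
  rewrite /adj nb_neq //=; apply: (edge_h1 (p := (nb v, v))).
  by rewrite mem_cat mem_per /= vI eqxx orbT.
by move=> u v; apply: connect_trans (toc v); rewrite conn_sym.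
Qed.

Lemma ps1_bridge : bridge_ok set0 ps1.
Proof.
apply: fresh_bridge.
- apply/allP => [[u v]]; rewrite mem_cat mem_star mem_per /= => /orP[/andP[/eqP -> vI]|/andP[vI /eqP ->]].
    by move: vI; rewrite !inE eq_sym => /andP[].
  exact: nb_neq.
- rewrite map_cat cat_uniq /star /per -!map_comp /comp /= !map_id_in ?enum_uniq //=.
  rewrite andbT; apply/hasPn => x; rewrite /= !mem_enum !inE => xI; apply/negP => /andP[_].
  by rewrite (negbTE xI).
- by move=> p _ e; rewrite inE.
- rewrite pairwise_cat; apply/and3P; split.
  + apply/allrelP => [[u v] [x y]]; rewrite mem_star mem_per /= => /andP[/eqP -> _] /andP[yI _].
    by apply/negP => /eqP E; move: yI; rewrite E c0I.
  + apply: pairwise_all => [[u v] [x y]]; rewrite !mem_star /= => /andP[/eqP -> _] /andP[_].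
    by rewrite !inE => /andP[].
  + apply: pairwise_all => [[u v] [x y]]; rewrite !mem_per /= => /andP[vI /eqP ->] /andP[yI _].
    by apply/negP => /eqP E; move: yI; rewrite E nbI.
Qed.

Lemma ps1_nn : ps1 != [::].
Proof.
have [v nv] : exists v, v != c0.
  have o0 : (0 < N)%N by apply: leq_trans N2.
  have o1 : (1 < N)%N by [].
  case: (eqVneq (Ordinal o0) c0) => E; last by exists (Ordinal o0).
  by exists (Ordinal o1); rewrite -E -(inj_eq val_inj).
case: (boolP (v \in I')) => vI.
  have : (c0, v) \in ps1 by rewrite mem_cat mem_star /= eqxx !inE nv vI.
  by case: (ps1).
have : (nb v, v) \in ps1 by rewrite mem_cat mem_per /= vI eqxx orbT.
by case: (ps1).
Qed.

Lemma mem_ps2 q : (q \in ps2) = [&& q.1 \in I', q.2 \in I', (q.1 < q.2)%N, q.1 != c0 & q.2 != c0].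
Proof. by rewrite mem_enum. Qed.

Lemma cp_cond h a b0 : h1 \subset h -> h \subset g :\ [set a; b0] ->
  a \in I' -> b0 \in I' -> a != b0 -> a != c0 -> b0 != c0 ->
  forall b, b != a -> (dist (h :|: [set [set a; b0]]) a b <= dist g a b)%N \/
                      (dist (g :\ [set a; b0]) a b <= dist g a b)%N.
Proof.
move=> h1h hg aI b0I nab nac nbc b nba.
have N3 : (2 < N)%N by exact: three_N nab nbc nac.
have N1 : (1 < N)%N by apply: ltnW.
set e := [set a; b0].
have adjw : adj (h :|: [set e]) a b0 by rewrite /adj nab !inE eqxx orbT.
have adjgo : forall u v, adj g u v -> [set u; v] != e -> adj (g :\ e) u v.
  by move=> u v /andP[nuv ug] ne; rewrite /adj nuv !inE ne ug.
have nin : forall u v, u \notin I' -> [set u; v] != e.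
  move=> u v uI; apply/negP => /eqP E.
  have : u \in e by rewrite -E !inE eqxx.
  by rewrite /e !inE => /orP[] /eqP E'; move: uI; rewrite E' ?aI ?b0I.
have nin' : forall u v, u \notin I' -> [set v; u] != e by move=> u v uI; rewrite setUC nin.
have dg1 : (1 <= dist g a b)%N by apply: dist_ge1 => //; rewrite eq_sym.
case: (eqVneq b b0) => [->|nbb0].
  by left; exact: leq_trans (dist_le1 N1 adjw) (dist_ge1 g N1 nab).
have nab' : a != b by rewrite eq_sym.
case: (boolP (b \in I')) => bI.
  right; apply: leq_trans dg1; apply: dist_le1 => //.
  apply: adjgo; first by apply: core => //; rewrite eq_sym.
  apply/negP => /eqP E; case/orP: (set2_eq E nab') => [/andP[_ /eqP]|/andP[/eqP]].
    by move=> E'; rewrite E' eqxx in nbb0.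
  by move=> E'; rewrite E' eqxx in nab.
have nadj : ~~ adj g a b -> (2 <= dist g a b)%N by move=> na; apply: dist_ge2 => //; rewrite eq_sym.
have nadj' : nb b != a -> ~~ adj g a b.
  by move=> nk; apply/negP => ag; move: nk; rewrite (nbuniq bI aI) ?eqxx // adj_sym.
case: (eqVneq (nb b) a) => [ka|nka].
  right; apply: leq_trans dg1; apply: dist_le1 => //.
  by rewrite adj_sym; apply: adjgo; [rewrite -ka; exact: nbadj | exact: nin].
case: (eqVneq (nb b) b0) => [kb|nkb].
  left; apply: leq_trans (nadj (nadj' nka)); apply: dist_le2 adjw _ => //.
  rewrite /adj -kb nb_neq //=; rewrite !inE; apply/orP; left.
  apply: (subsetP h1h); apply: (edge_h1 (p := (nb b, b))).
  by rewrite mem_cat mem_per /= bI eqxx orbT.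
right; apply: leq_trans (nadj (nadj' nka)); apply: (dist_le2 (k := nb b)) => //.
  apply: adjgo; first by apply: core => //; [exact: nbI | rewrite eq_sym].
  have nak : a != nb b by rewrite eq_sym.
  apply/negP => /eqP E; case/orP: (set2_eq E nak) => /andP[_ /eqP].
    by move=> E'; rewrite E' eqxx in nkb.
  by move=> E'; rewrite E' eqxx in nka.
by rewrite adj_sym; apply: adjgo; [exact: nbadj | exact: nin].
Qed.

Lemma ps2_notin_h1 q : q \in ps2 -> edge q \notin h1.
Proof.
rewrite mem_ps2 => /and5P[q1I q2I _ q1c q2c]; apply/negP.
rewrite /h1 /edges in_set => /mapP [[u v]]; rewrite mem_cat mem_star mem_per /=.
case/orP => [/andP[/eqP -> _]|/andP[vI /eqP ->]] E.
  have : c0 \in edge q by rewrite E !inE eqxx.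
  by rewrite !inE => /orP[] /eqP E'; [rewrite E' eqxx in q1c | rewrite E' eqxx in q2c].
have : v \in edge q by rewrite E !inE eqxx orbT.
by rewrite !inE => /orP[] /eqP E'; move: vI; rewrite E' ?q1I ?q2I.
Qed.

Lemma ps2_inj q q' : q \in ps2 -> q' \in ps2 -> edge q = edge q' -> q = q'.
Proof.
rewrite !mem_ps2 => /and5P[_ _ l _ _] /and5P[_ _ l' _ _] E.
have nq : q.1 != q.2 by apply/eqP => E'; move: l; rewrite E' ltnn.
case/orP: (set2_eq E nq) => /andP[/eqP e1 /eqP e2].
  by case: q q' e1 e2 {E nq l l'} => [a b] [a' b'] /= -> ->.
by move: l l'; rewrite e1 e2 => l l'; have := ltn_trans l l'; rewrite ltnn.
Qed.

Lemma ok2_ps2 l h : uniq l -> {subset l <= ps2} -> h1 \subset h -> h \subset g ->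
  (forall q, q \in l -> edge q \notin h) -> ok2 g h l.
Proof.
elim: l h => //= p l IH h /andP[pl u] sub h1h hg nh.
have pin : p \in ps2 by apply: sub; rewrite inE eqxx.
have := pin; rewrite mem_ps2 => /and5P[p1I p2I lp p1c p2c].
have np : p.1 != p.2 by apply/eqP => E'; move: lp; rewrite E' ltnn.
have ep : edge p \in g by case/andP: (core p1I p2I np).
have nph : edge p \notin h by apply: nh; rewrite inE eqxx.
have hs : h \subset g :\ edge p by rewrite subsetD1 hg nph.
split; first (split => // x y; exact: conn_sub h1h (h1_conn x y)).
split; first split.
- by apply: cp_cond => //.
- have e21 : edge p = [set p.2; p.1] by rewrite /edge setUC.
  rewrite e21; apply: cp_cond => //; first by rewrite -e21.
  by rewrite eq_sym.
apply: IH => //.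
- by move=> q qin; apply: sub; rewrite inE qin orbT.
- by apply: subset_trans h1h (subsetUl _ _).
- by rewrite subUset hg sub1set.
- move=> q qin; rewrite in_setU in_set1 negb_or nh ?inE ?qin ?orbT //=.
  apply/negP => /eqP E; have qp : q = p.
    by apply: ps2_inj => //; apply: sub; rewrite inE qin orbT.
  by move: pl; rewrite -qp qin.
Qed.

Lemma g_eq : h1 :|: edges ps2 = g.
Proof.
apply/setP => x; apply/idP/idP.
  rewrite in_setU => /orP[/(subsetP h1_sub_g) //|].
  rewrite /edges in_set => /mapP [q qin ->].
  have := qin; rewrite mem_ps2 => /and5P[q1I q2I lq _ _].
  have nq : q.1 != q.2 by apply/eqP => E'; move: lq; rewrite E' ltnn.
  by case/andP: (core q1I q2I nq).
move=> xg; have := forall_inP wf x xg => /cards2P [u [v [nuv Ex]]].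
have a : adj g u v by rewrite /adj nuv -Ex xg.
have inh1 : forall p, p \in ps1 -> edge p = x -> x \in h1 :|: edges ps2.
  by move=> p pin <-; rewrite in_setU edge_h1.
case: (adj_char a) => [[uI vI]|[uI vE]|[vI uE]].
- case: (eqVneq u c0) => [uc|nuc].
    apply: (inh1 (c0, v)); last by rewrite /edge Ex uc.
    by rewrite mem_cat mem_star /= eqxx !inE vI -uc eq_sym nuv.
  case: (eqVneq v c0) => [vc|nvc].
    apply: (inh1 (c0, u)); last by rewrite /edge Ex vc setUC.
    by rewrite mem_cat mem_star /= eqxx !inE uI nuc.
  rewrite in_setU /edges in_set; apply/orP; right; rewrite inE; apply/mapP.
  case: (ltngtP u v) => l.
  + by exists (u, v); rewrite ?mem_ps2 //= uI vI l nuc nvc.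
  + by exists (v, u); rewrite ?mem_ps2 /= ?vI ?uI ?l ?nuc ?nvc // /edge setUC.
  + by move: nuv; rewrite (val_inj l) eqxx.
- apply: (inh1 (nb u, u)); last by rewrite /edge Ex vE setUC.
  by rewrite mem_cat mem_per /= uI eqxx orbT.
- apply: (inh1 (nb v, v)); last by rewrite /edge Ex uE.
  by rewrite mem_cat mem_per /= vI eqxx orbT.
Qed.

Lemma cp_GIC0 : in_GIC f kappa Ef c delta g.
Proof.
have [E1 E2] := run_bridges (K := set0) (sub0set _) ps1_bridge.
have n1 : netof set0 ps1 = h1 by rewrite netofE set0U.
have KT : (run (set0, set0) ps1).2 = setT.
  apply/eqP; rewrite eqEsubset subsetT /=.
  by have := run_last (set0, set0) ps1_nn; rewrite E1 n1 connset_T //; exact: h1_conn.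
have ok := ok2_ps2 (enum_uniq _) (fun q qin => qin) (subxx h1) h1_sub_g (@ps2_notin_h1).
have R1 : run (set0, set0) ps1 = (h1, setT) by rewrite -n1 -E1 -KT; case: (run _ _).
apply: (GIC_of (s := ps1 ++ ps2)).
- by rewrite /valid_path all_cat; apply/andP; split;
    [exact: bridge_valid ps1_bridge | exact: ok2_valid ok].
- by rewrite run_cat R1 (run2 st ok) netofE g_eq.
- exact: st.
Qed.


End CP.

Lemma cp_GIC g (I' : {set 'I_N}) : wf_network g -> stable_CI f kappa Ef c delta g ->
  I' != set0 -> (forall i j, i \in I' -> j \in I' -> i != j -> adj g i j) ->
  (forall j', j' \notin I' -> #|[set k in I' | adj g j' k]| = 1%N /\
        (forall k, k \notin I' -> ~~ adj g j' k)) ->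
  in_GIC f kappa Ef c delta g.
Proof.
move=> wf st /set0Pn [c0 c0I] core per.
pose nb j := odflt c0 [pick k in I' | adj g j k].
have nbP : forall j, j \notin I' -> [/\ nb j \in I', adj g j (nb j) &
              forall k, k \in I' -> adj g j k -> k = nb j].
  move=> j jI; have [/eqP /cards1P [x Sx] _] := per j jI.
  have xS : x \in [set k in I' | adj g j k] by rewrite Sx inE.
  have uq : forall k, k \in I' -> adj g j k -> k = x.
    by move=> k kI ak; apply/set1P; rewrite -Sx inE kI ak.
  rewrite /nb; case: pickP => [k /andP[kI ak]|none] /=.
    by rewrite (uq k kI ak); move: xS; rewrite inE => /andP[-> ->]; split.
  by move: xS; rewrite inE => /andP[xI ax]; move: (none x); rewrite /= xI ax.
apply: (cp_GIC0 (I' := I') (c0 := c0) (nb := nb)) => //.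
- by move=> j /nbP [].
- by move=> j /nbP [].
- by move=> j k /nbP [_ _ H]; apply: H.
- by move=> j k /per [_ H]; apply: H.
Qed.

Lemma complete_GIC g : wf_network g -> stable_CI f kappa Ef c delta g -> is_complete g ->
  in_GIC f kappa Ef c delta g.
Proof.
move=> wf st cmp; apply: (cp_GIC (I' := setT)) => //.
- have o0 : (0 < N)%N by apply: leq_trans N2.
  by apply/set0Pn; exists (Ordinal o0); rewrite inE.
- by move=> i j _ _; apply: cmp.
- by move=> j; rewrite inE.
Qed.

Lemma wheel_GIC g : stable_CI f kappa Ef c delta g -> is_wheel g ->
  in_GIC f kappa Ef c delta g.
Proof.
move=> st [sg Eg].
have o0 : (0 < N)%N by apply: leq_trans N2.
pose o := Ordinal o0.
pose mk t : 'I_N := insubd o t.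
have vmk : forall t, (t < N)%N -> val (mk t) = t by move=> t tN; rewrite /mk val_insubd tN.
have mkv : forall i : 'I_N, mk (val i) = i by move=> i; apply: val_inj; rewrite vmk ?ltn_ord.
have mkinj : forall t u, (t < N)%N -> (u < N)%N -> mk t = mk u -> t = u.
  by move=> t u tN uN E; rewrite -(vmk t tN) -(vmk u uN) E.
have Npos : (N.-1 < N)%N by rewrite prednK // ltnSn.
have iN : forall t, t \in iota 0 N.-1 -> (t < N)%N /\ (t.+1 < N)%N.
  move=> t; rewrite mem_iota add0n => /= tN; split; first exact: ltn_trans tN Npos.
  by move: tN; rewrite -ltnS prednK.
pose ps1 := [seq (sg (mk t), sg (mk t.+1)) | t <- iota 0 N.-1].
pose cl := (sg (mk N.-1), sg (mk 0)).
have Sk : forall t, (t.+1 < N)%N -> ordS (mk t) = mk t.+1.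
  move=> t tN; apply: val_inj; rewrite /= !vmk ?modn_small //; exact: ltn_trans (ltnSn _) tN.
have Scl : ordS (mk N.-1) = mk 0.
  apply: val_inj; rewrite /= vmk // prednK // modnn vmk //.
have gE : forall x, (x \in g) = (x \in edges ps1) || (x == edge cl).
  move=> x; rewrite Eg /edges in_set; apply/imsetP/orP.
    move=> [k _ ->]; rewrite -(mkv k).
    have kN := ltn_ord k.
    case: (ltnP (val k) N.-1) => kl.
      left; apply/mapP; exists (sg (mk k), sg (mk k.+1)).
        by apply/mapP; exists (val k) => //; rewrite mem_iota.
      by rewrite Sk //; move: kl; rewrite -ltnS prednK.
    have -> : val k = N.-1.
      apply/eqP; rewrite eqn_leq kl andbT.
      by rewrite -ltnS prednK.
    by right; rewrite Scl.
  case=> [/mapP [p /mapP [t tin ->] ->]|/eqP ->].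
    by exists (mk t) => //; rewrite Sk //; case: (iN t tin).
  by exists (mk N.-1) => //; rewrite Scl.
have gs : edges ps1 \subset g by apply/subsetP => x xe; rewrite gE xe.
have ok1 : bridge_ok set0 ps1.
  apply: fresh_bridge.
  - apply/allP => p /mapP [t tin ->] /=; rewrite (inj_eq perm_inj).
    apply/negP => /eqP E; have [t1 t2] := iN t tin.
    by move: (mkinj _ _ t1 t2 E) => /n_Sn.
  - rewrite -map_comp.
    rewrite map_inj_in_uniq ?iota_uniq //.
    move=> t u tin uin /= /perm_inj E.
    have [_ t2] := iN t tin; have [_ u2] := iN u uin.
    by move: (mkinj _ _ t2 u2 E) => [].
  - by move=> p _ e; rewrite inE.
  - rewrite pairwise_map.
    have : pairwise ltn (iota 0 N.-1) by rewrite -sorted_pairwise ?iota_ltn_sorted //; exact: ltn_trans.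
    apply: sub_in_pairwise (allss _) => t u tin uin /= ltu.
    rewrite (inj_eq perm_inj); apply/negP => /eqP E.
    have [t1 _] := iN t tin; have [_ u2] := iN u uin.
    move: (mkinj _ _ u2 t1 E) => E'; rewrite -E' in ltu.
    by move: ltu; rewrite ltnNge leqnSn.
have [E1 E2] := run_bridges (K := set0) (sub0set _) ok1.
have n1 : netof set0 ps1 = edges ps1 by rewrite netofE set0U.
have conn1 : net_connected (edges ps1).
  have ct : forall t, (t < N)%N -> connect (adj (edges ps1)) (sg (mk 0)) (sg (mk t)).
    elim=> [|t IH] tN; first exact: connect0.
    apply: connect_trans (IH (ltn_trans (ltnSn _) tN)) _; apply: connect1.
    have tin : t \in iota 0 N.-1.
      by rewrite mem_iota add0n; move: tN; rewrite -(ltnS t.+1) prednK.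
    rewrite /adj (inj_eq perm_inj); apply/andP; split.
      apply/negP => /eqP E; move: (mkinj _ _ (ltn_trans (ltnSn _) tN) tN E) => /n_Sn //.
    rewrite /edges in_set; apply/mapP; exists (sg (mk t), sg (mk t.+1)) => //.
    by apply/mapP; exists t.
  move=> u v; have cu := ct _ (ltn_ord (sg^-1 u)%g); have cv := ct _ (ltn_ord (sg^-1 v)%g).
  rewrite !mkv !permKV in cu cv.
  by apply: connect_trans cv; rewrite conn_sym.
have nn : ps1 != [::].
  by rewrite /ps1 -size_eq0 size_map size_iota -lt0n -subn1 subn_gt0.
have KT : (run (set0, set0) ps1).2 = setT.
  apply/eqP; rewrite eqEsubset subsetT /=.
  by have := run_last (set0, set0) nn; rewrite E1 n1 connset_T.
have R1 : run (set0, set0) ps1 = (edges ps1, setT) by rewrite -n1 -E1 -KT; case: (run _ _).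
have ncl : cl.1 != cl.2.
  rewrite /cl /= (inj_eq perm_inj); apply/negP => /eqP E.
  have := mkinj _ _ Npos o0 E; move/eqP; rewrite -subn1 subn_eq0 => H.
  by have := leq_trans N2 H.
apply: (GIC_of (s := ps1 ++ [:: cl])).
- rewrite /valid_path all_cat /= ncl andbT.
  rewrite andbT; exact: bridge_valid ok1.
- rewrite run_cat R1.
  case: (boolP (edge cl \in edges ps1)) => ein.
    have eg : edges ps1 = g.
      apply/setP => x; rewrite gE; case: eqP => [->|]; by rewrite ?ein ?orbF ?orbT.
    rewrite eg; have := st [:: cl]; rewrite /valid_path /= ncl => /(_ isT).
    rewrite /Defs.run /= /Defs.step /=; case: ifP => _ ->; by rewrite /update_know setTU.
  have eg : edges ps1 :|: [set edge cl] = g.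
    by apply/setP => x; rewrite gE in_setU in_set1.
  rewrite (run2 (g := g)) //= ?netofE /= -/(edge cl).
    by rewrite /edges /= eg.
  split; last split => //.
  + split => //.
    * by rewrite gE eqxx orbT.
    * by rewrite subsetD1 gs ein.
  + split => b _; left; rewrite /edge in eg; rewrite eg //.
- exact: st.
Qed.

End Pay.

Unset Implicit Arguments.

Theorem theorem2 (R : realFieldType) (X : Type) (N : nat)
    (f : X -> R) (c delta Ef : R) (kappa : 'I_N -> X) (g : network N) :
  (2 <= N)%N ->
  (forall x, 0 < f x) -> 0 < c -> 0 < delta -> delta < 1 ->
  c <= Ef ->
  wf_network g ->
  stable_CI f kappa Ef c delta g ->
  is_empty_net g \/ is_tree g \/ is_complete g \/ is_core_periphery g
    \/ is_wheel g ->
  in_GIC f kappa Ef c delta g.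
Proof.
move=> N2 fpos cpos dpos dlt1 cEf wf st [E|[T|[C|[CP|W]]]].
- rewrite /is_empty_net in E; subst g; by apply: empty_GIC.
- by apply: tree_GIC.
- by apply: complete_GIC.
- case: CP => I' [ne _ core per]; by eapply cp_GIC; eassumption.
- by apply: wheel_GIC.
Qed.
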